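(* Let $G\in\mathcal{G}_{k,n,p}$ and $v,w\in V(G)$. Then $H_{wv}\lesssim (pn)^k$.
   Context: Fix an integer $k\ge2$ and let $p=p(n)$ satisfy $\frac{\log n}{n^{(k-1)/k}}\le p\le 1-\Omega(\frac{\log^4 n}{n})$. $\mathcal{G}_{k,n,p}$ denotes the set of graphs $G$ on $n$ vertices satisfying: (i) $G$ is not bipartite; (ii) $\operatorname{diam}(G)\le k$; (iii) every vertex has degree $d(v)=pn\pm\mathcal{O}(\sqrt{pn\log n})$; (iv) $2|E(G)|=pn^2\pm\mathcal{O}(\sqrt{pn^2\log n})$; (v) $|N(v)\cap N(w)|=p^2n\pm\mathcal{O}(\max\{\sqrt{p^2n\log n},\log n\})$ for all $v\ne w$; (vi) the unit eigenvector $\phi$ of the largest adjacency eigenvalue has entries $\phi_i=\frac1{\sqrt n}\pm\mathcal{O}(\frac{\log^{3/2}n}{\sqrt p\,n\log(pn)})$; (vii) $\lambda_1=(1+o(1))pn$; (viii) $\max\{|\lambda_2|,|\lambda_n|\}=\mathcal{O}(\sqrt{pn})$, where $\lambda_1\ge\dots\ge\lambda_n$ are the adjacency eigenvalues. Asymptotic notation is as $n\to\infty$ with constants independent of $n$; $f\lesssim g$ means $f=\mathcal{O}(g)$. $H_{wv}$ is the expected first hitting time of $v$ for a simple random walk on $G$ started at $w$. *)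

(* Defs.v *)
From HB Require Import structures.
From mathcomp Require Import all_boot all_order all_algebra.
From mathcomp Require Import all_classical all_reals all_analysis.
Set Implicit Arguments. Unset Strict Implicit. Unset Printing Implicit Defensive.
Import Order.TTheory GRing.Theory Num.Theory.
Local Open Scope ring_scope.

Section GraphDefs.
Variable R : realType.
Variable n : nat.
Variable e : rel 'I_n.

Definition simple_graph : Prop := symmetric e /\ irreflexive e.

Definition deg (x : 'I_n) : nat := #|[set y | e x y]|.

Definition nedges : nat := #|[set q : 'I_n * 'I_n | (q.1 < q.2)%N && e q.1 q.2]|.

Definition codeg (x y : 'I_n) : nat := #|[set u | e x u && e y u]|.

Definition bipartite : Prop :=
  exists f : 'I_n -> bool, forall x y, e x y -> f x != f y.

Definition diam_le (k : nat) : Prop :=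
  forall x y : 'I_n, exists s : seq 'I_n,
    [/\ path e x s, last x s = y & (size s <= k)%N].

Definition adj : 'M[R]_n := \matrix_(i, j) (e i j)%:R.

Definition adj_spectrum (lam : nat -> R) : Prop :=
  char_poly adj = \prod_(i < n) ('X - (lam i)%:P) /\
  (forall i j : nat, (i <= j)%N -> (j < n)%N -> lam j <= lam i).

Definition trans (x y : 'I_n) : R := if e x y then (deg x)%:R^-1 else 0.

(* P_w(T_v = t): probability that the walk started at w first hits v at time t *)
Definition first_hit_prob (w v : 'I_n) (t : nat) : R :=
  \sum_(s : (t.+1).-tuple 'I_n |
          [&& nth w s 0 == w, nth w s t == v & [forall i : 'I_t, nth w s i != v]])
     \prod_(i < t) trans (nth w s i) (nth w s i.+1).

Definition hitting_time (w v : 'I_n) : \bar R :=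
  (\sum_(0 <= t <oo) ((t%:R * first_hit_prob w v t)%:E))%E.

(* Membership in G_{k,n,p}; every O(.) is made explicit with the constant C0,
   and the o(1) in (vii) is the given sequence eps. *)
Definition in_class (k : nat) (p C0 : R) (eps : nat -> R) : Prop :=
  let nR := (n%:R : R) in
  [/\ ~ bipartite /\ diam_le k,
      (forall x, `|(deg x)%:R - p * nR| <= C0 * Num.sqrt (p * nR * ln nR)),
      `|(2 * nedges)%:R - p * nR ^+ 2| <= C0 * Num.sqrt (p * nR ^+ 2 * ln nR),
      (forall x y, x != y ->
         `|(codeg x y)%:R - p ^+ 2 * nR| <=
           C0 * Num.max (Num.sqrt (p ^+ 2 * nR * ln nR)) (ln nR)) &
      exists lam : nat -> R,
      [/\ adj_spectrum lam,
          (exists phi : 'cV[R]_n,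
             [/\ adj *m phi = lam 0%N *: phi,
                 \sum_i phi i 0 ^+ 2 = 1 &
                 forall i, `|phi i 0 - (Num.sqrt nR)^-1| <=
                   C0 * (powR (ln nR) (3 / 2) / (Num.sqrt p * nR * ln (p * nR)))]),
          `|lam 0%N - p * nR| <= `|eps n| * (p * nR) &
          Num.max `|lam 1%N| `|lam n.-1| <= C0 * Num.sqrt (p * nR)]].

End GraphDefs.

(* Main.v *)
Require Import Defs.
From HB Require Import structures.
From mathcomp Require Import all_boot all_order all_algebra.
From mathcomp Require Import all_classical all_reals all_analysis.
From mathcomp Require Import ring lra.
Import Order.TTheory GRing.Theory Num.Theory.
Local Open Scope ring_scope.
Section Walk.
Variables (R : realType) (n : nat) (e : rel 'I_n) (v : 'I_n).

Definition step (f : 'I_n -> R) (x : 'I_n) : R :=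
  if x != v then \sum_y trans R e x y * f y else 0.

Definition aa t := iter t step (fun _ => 1).
Definition gg t := iter t step (fun y => (y == v)%:R).

Lemma trans_ge0 x y : 0 <= trans R e x y.
Proof. by rewrite /trans; case: (e x y). Qed.

Lemma sum_trans x : (0 < deg e x)%N -> \sum_y trans R e x y = 1.
Proof.
move=> hd.
have -> : \sum_y trans R e x y = \sum_(y in [set y | e x y]) (deg e x)%:R^-1.
  rewrite [RHS]big_mkcond /=; apply: eq_bigr => y _; rewrite inE /trans.
  by case: (e x y).
rewrite sumr_const -[#|_|]/(deg e x) -[_ *+ deg e x]mulr_natr mulVf //.
by rewrite pnatr_eq0 -lt0n.
Qed.

Lemma step_ge0 f x : (forall y, 0 <= f y) -> 0 <= step f x.
Proof.
move=> hf; rewrite /step; case: (x != v) => //.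
by apply: sumr_ge0 => y _; apply: mulr_ge0 => //; apply: trans_ge0.
Qed.

Lemma step_mono f h x : (forall y, f y <= h y) -> step f x <= step h x.
Proof.
move=> hf; rewrite /step; case: (x != v) => //.
by apply: ler_sum => y _; apply: ler_wpM2l => //; apply: trans_ge0.
Qed.

Lemma step_scale c f : step (fun y => c * f y) = (fun y => c * step f y).
Proof.
apply: funext => x; rewrite /step; case: (x != v); last by rewrite mulr0.
rewrite mulr_sumr; apply: eq_bigr => y _; by rewrite mulrCA.
Qed.

Lemma step_sub f h : step (fun y => f y - h y) = (fun y => step f y - step h y).
Proof.
apply: funext => x; rewrite /step; case: (x != v); last by rewrite subr0.
rewrite -sumrB; apply: eq_bigr => y _; by rewrite mulrBr.
Qed.

Lemma iter_ge0 t f : (forall y, 0 <= f y) -> forall y, 0 <= iter t step f y.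
Proof.
move=> hf; elim: t => [|t IH] y //=; exact: step_ge0.
Qed.

Lemma iter_mono t f h : (forall y, f y <= h y) -> forall y, iter t step f y <= iter t step h y.
Proof.
move=> hf; elim: t => [|t IH] y //=; exact: step_mono.
Qed.

Lemma iter_scale t c f : iter t step (fun y => c * f y) = (fun y => c * iter t step f y).
Proof.
elim: t => [|t IH] //=; by rewrite IH step_scale.
Qed.

Lemma aa_ge0 t y : 0 <= aa t y.
Proof. by apply: iter_ge0. Qed.
Lemma gg_ge0 t y : 0 <= gg t y.
Proof. by apply: iter_ge0 => z; rewrite ler0n. Qed.

Hypothesis hdeg : forall x, (0 < deg e x)%N.

Lemma step1 x : step (fun _ => 1) x = (x != v)%:R.
Proof.
rewrite /step; case: (x != v) => //.
under eq_bigr do rewrite mulr1.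
by rewrite sum_trans.
Qed.

Lemma gg_tele t : gg t = (fun y => aa t y - aa t.+1 y).
Proof.
elim: t => [|t IH].
  apply: funext => y; rewrite /gg /aa /= step1.
  by case: (y == v); rewrite /= ?subr0 ?subrr.
rewrite /gg /= -/(gg t) IH step_sub.
by apply: funext => y; rewrite /aa.
Qed.

Lemma sum_gg t x : \sum_(i < t) gg i x = 1 - aa t x.
Proof.
elim: t => [|t IH]; first by rewrite big_ord0 /aa /= subrr.
by rewrite big_ord_recr /= IH gg_tele addrA subrK.
Qed.

Lemma aa_le1 t x : aa t x <= 1.
Proof.
have := sum_gg t x.
have : 0 <= \sum_(i < t) gg i x by apply: sumr_ge0 => i _; apply: gg_ge0.
move=> h1 h2; rewrite h2 in h1; lra.
Qed.


Lemma sum_mono_ord (F : nat -> R) m m' : (forall i, 0 <= F i) -> (m <= m')%N ->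
  \sum_(i < m) F i <= \sum_(i < m') F i.
Proof.
move=> hF hm; rewrite -(subnKC hm) big_split_ord /= lerDl.
by apply: sumr_ge0 => i _.
Qed.

Lemma sum_single (F : 'I_n -> R) y : (forall z, 0 <= F z) -> F y <= \sum_z F z.
Proof.
move=> hF; rewrite (bigD1 y) //= lerDl; by apply: sumr_ge0 => i _.
Qed.

Variable D : R.
Hypothesis hD1 : 1 <= D.
Hypothesis htr : forall x y, e x y -> D^-1 <= trans R e x y.

Lemma Dinv_ge0 : 0 <= D^-1.
Proof. by rewrite invr_ge0 (le_trans ler01 hD1). Qed.
Lemma Dinv_le1 : D^-1 <= 1.
Proof. have hD : 0 < D by exact: (lt_le_trans ltr01 hD1).
by rewrite invr_le1 // unitfE gt_eqF. Qed.

Lemma path_hit s x : path e x s -> last x s = v ->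
  D^-1 ^+ size s <= \sum_(i < (size s).+1) gg i x.
Proof.
elim: s x => [|y s IH] x /=.
  move=> _ ->; by rewrite big_ord_recl big_ord0 addr0 /gg /= eqxx expr0.
move=> /andP[exy hp] hl.
rewrite big_ord_recl.
case: (eqVneq x v) => [->|xv].
  have -> : gg 0 v = 1 by rewrite /gg /= eqxx.
  apply: le_trans (_ : 1 <= _).
    apply: exprn_ile1; [exact: Dinv_ge0 | exact: Dinv_le1].
  by rewrite lerDl; apply: sumr_ge0 => i _; apply: gg_ge0.
apply: le_trans (_ : \sum_(i < (size s).+1) gg (bump 0 i) x <= _); last first.
  by rewrite lerDr gg_ge0.
have h1 : forall i, gg (bump 0 i) x >= trans R e x y * gg i y.
  move=> i; rewrite /bump /= add0n /step xv.
  apply: (sum_single (fun z => trans R e x z * gg i z)).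
  by move=> z; apply: mulr_ge0; [apply: trans_ge0 | apply: gg_ge0].
apply: le_trans (_ : trans R e x y * \sum_(i < (size s).+1) gg i y <= _); last first.
  by rewrite mulr_sumr; apply: ler_sum => i _; apply: h1.
rewrite exprS; apply: ler_pM.
- exact: Dinv_ge0.
- apply: exprn_ge0; exact: Dinv_ge0.
- exact: htr.
- exact: IH.
Qed.

Variable k : nat.
Hypothesis hdiam : forall x, exists s, [/\ path e x s, last x s = v & (size s <= k)%N].

Definition q := D^-1 ^+ k.

Lemma q_gt0 : 0 < q.
Proof. by apply: exprn_gt0; rewrite invr_gt0 (lt_le_trans ltr01 hD1). Qed.
Lemma q_le1 : q <= 1.
Proof. apply: exprn_ile1; [exact: Dinv_ge0 | exact: Dinv_le1]. Qed.

Lemma aaK x : aa k.+1 x <= 1 - q.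
Proof.
have := sum_gg k.+1 x.
have [s [hp hl hs]] := hdiam x.
have h1 := path_hit s x hp hl.
have h2 : \sum_(i < (size s).+1) gg i x <= \sum_(i < k.+1) gg i x.
  by apply: (sum_mono_ord (fun i => gg i x)) => // i; apply: gg_ge0.
have h3 : q <= D^-1 ^+ size s.
  by apply: ler_wiXn2l => //; [exact: Dinv_ge0 | exact: Dinv_le1].
lra.
Qed.

Lemma aa_decay t x : aa (t + k.+1) x <= (1 - q) * aa t x.
Proof.
rewrite /aa iterD.
have := iter_scale t (1 - q) (fun _ => 1) => /= hs.
have -> : (1 - q) * iter t step (fun=> 1) x = iter t step (fun=> (1 - q) * 1) x.
  by rewrite hs.
apply: iter_mono => y; rewrite mulr1; exact: aaK.
Qed.

Lemma sumA j x : \sum_(i < j * k.+1) aa i x <= k.+1%:R / q.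
Proof.
have hq := q_gt0.
elim: j => [|j IH]; first by rewrite big_ord0 divr_ge0 // ltW.
rewrite mulSn big_split_ord.
have h1 : \sum_(i < k.+1) aa (lshift (j * k.+1) i) x <= k.+1%:R.
  apply: le_trans (_ : \sum_(i < k.+1) (1 : R) <= _).
    by apply: ler_sum => i _; apply: aa_le1.
  by rewrite sumr_const card_ord.
have h2 : \sum_(i < j * k.+1) aa (rshift k.+1 i) x <= (1 - q) * \sum_(i < j * k.+1) aa i x.
  rewrite mulr_sumr; apply: ler_sum => i _; have := aa_decay i x; by rewrite addnC.
have h3 : (1 - q) * \sum_(i < j * k.+1) aa i x <= (1 - q) * (k.+1%:R / q).
  apply: ler_wpM2l => //; have := q_le1; lra.
have -> : k.+1%:R / q = k.+1%:R + (1 - q) * (k.+1%:R / q).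
  by field; rewrite gt_eqF.
exact: (lerD h1 (le_trans h2 h3)).
Qed.

Lemma hit_ident N x : \sum_(i < N) i%:R * gg i x + N%:R * aa N x = \sum_(i < N) aa i.+1 x.
Proof.
elim: N => [|N IH]; first by rewrite !big_ord0 mul0r addr0.
rewrite !big_ord_recr /= gg_tele.
have -> : \sum_(i < N) aa (i : nat).+1 x = \sum_(i < N) i%:R * gg i x + N%:R * aa N x by rewrite IH.
have e1 : aa (N + 1) x = step (aa N) x by rewrite addn1.
rewrite -addn1 natrD e1; ring.
Qed.

Lemma hit_bound N x : \sum_(i < N) i%:R * gg i x <= k.+1%:R / q.
Proof.
have h1 := hit_ident N x.
have h2 : 0 <= N%:R * aa N x by apply: mulr_ge0; [rewrite ler0n | apply: aa_ge0].
have h3 : \sum_(i < N) aa i.+1 x <= \sum_(i < N.+1) aa i x.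
  by rewrite big_ord_recl lerDr aa_ge0.
have h4 : \sum_(i < N.+1) aa i x <= \sum_(i < N.+1 * k.+1) aa i x.
  apply: (sum_mono_ord (fun i => aa i x)) => [i|]; first exact: aa_ge0.
  by rewrite leq_pmulr.
have h5 := sumA N.+1 x.
lra.
Qed.

End Walk.
Section FH.
Variables (R : realType) (n : nat) (e : rel 'I_n) (v : 'I_n).

Lemma fhp_eq d t x :
  \sum_(s : (t.+1).-tuple 'I_n |
          [&& nth d s 0 == x, nth d s t == v & [forall i : 'I_t, nth d s i != v]])
     \prod_(i < t) trans R e (nth d s i) (nth d s i.+1) = gg R n e v t x.
Proof.
elim: t x => [|t IH] x.
  under eq_bigr do rewrite big_ord0.
  case: (eqVneq x v) => [<-|xv].
    rewrite (big_pred1 [tuple x]) /gg /= ?eqxx //.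
    move=> s /=.
    have -> : [forall i : 'I_0, nth d s i != x] = true by apply/forallP => -[].
    rewrite andbT andbb.
    case: s => [[|a [|b l]] //= hs].
    by apply/eqP/eqP => [->|/(congr1 val) [->]] //; apply: val_inj.
  rewrite big_pred0 /gg /=; first by rewrite (negbTE xv).
  move=> s /=; apply/negP => /and3P[/eqP h1 /eqP h2 _].
  by rewrite -h1 h2 eqxx in xv.
rewrite (reindex_onto (fun s' : (t.+1).-tuple 'I_n => cons_tuple x s')
                     (fun s : (t.+2).-tuple 'I_n => behead_tuple s)); last first.
  move=> s /and3P[/eqP h0 _ _]; apply: val_inj => /=.
  by case: s h0 => [[|a l] //= hs] ->.
have hF : forall j : (t.+1).-tuple 'I_n,
    [forall i : 'I_t.+1, nth d (cons_tuple x j) i != v] =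
    (x != v) && [forall i : 'I_t, nth d j i != v].
  move=> j; apply/forallP/andP => [h|[h1 /forallP h2]].
    split; first exact: (h ord0).
    by apply/forallP => i; have := h (lift ord0 i).
  by case=> [[|i] hi] /=; [exact: h1 | exact: (h2 (Ordinal (hi : (i < t)%N)))].
rewrite (eq_bigl (fun j : (t.+1).-tuple 'I_n =>
           (x != v) && ((nth d j t == v) && [forall i : 'I_t, nth d j i != v]))); last first.
  move=> j; rewrite hF /=.
  have -> : behead_tuple (cons_tuple x j) == j by apply/eqP; apply: val_inj.
  by rewrite eqxx andbT /= andbCA.
case: (eqVneq x v) => [xv|xv].
  by rewrite big_pred0 // /gg /= /step xv eqxx.
rewrite /gg /= /step xv /= -/(gg R n e v t).
under [RHS]eq_bigr do rewrite -IH mulr_sumr.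
rewrite (partition_big (fun j : (t.+1).-tuple 'I_n => nth d j 0) predT) //=.
apply: eq_bigr => y _.
apply: eq_big => [j|j /andP[_ /eqP hj]].
  by rewrite andbC.
by rewrite big_ord_recl /= hj.
Qed.
End FH.
Local Open Scope classical_set_scope.

Lemma deg_pos (n : nat) (e : rel 'I_n) k : (2 <= n)%N -> diam_le e k ->
  forall x, (0 < deg e x)%N.
Proof.
move=> hn hd x.
have h0 : (0 < n)%N by apply: leq_trans hn.
pose y : 'I_n := if val x == 0%N then Ordinal hn else Ordinal h0.
have hxy : x != y.
  rewrite /y; case: ifP => hx; apply/eqP => /(congr1 val) /= h.
    by move: hx; rewrite -[val x]/(nat_of_ord x) h.
  by move: hx; rewrite -[val x]/(nat_of_ord x) h.
have [s [hp hl _]] := hd x y.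
case: s hp hl => [|z s] /=; first by move=> _ hxy'; rewrite hxy' eqxx in hxy.
move=> /andP[exz _] _.
by apply/card_gt0P; exists z; rewrite inE.
Qed.

Lemma hit_le (R : realType) (n : nat) (e : rel 'I_n) (v w : 'I_n) (k : nat) (D : R) :
  (forall x, (0 < deg e x)%N) -> 1 <= D ->
  (forall x y, e x y -> D^-1 <= trans R e x y) ->
  (forall x, exists s, [/\ path e x s, last x s = v & (size s <= k)%N]) ->
  (hitting_time R e w v <= (k.+1%:R * D ^+ k)%:E)%E.
Proof.
move=> hdeg hD1 htr hdiam.
have hb : forall N, \sum_(i < N) i%:R * gg R n e v i w <= k.+1%:R * D ^+ k.
  move=> N; have := @hit_bound R n e v hdeg D hD1 htr k hdiam N w.
  by rewrite /q exprVn invrK.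
rewrite /hitting_time.
apply: lime_le.
  apply: is_cvg_nneseries => i _ _; rewrite lee_fin.
  apply: mulr_ge0; first by rewrite ler0n.
  rewrite /first_hit_prob fhp_eq; exact: gg_ge0.
apply: nearW => N.
rewrite sumEFin lee_fin big_mkord.
apply: le_trans (hb N); rewrite le_eqVlt; apply/orP; left; apply/eqP.
apply: eq_bigr => i _; by rewrite /first_hit_prob fhp_eq.
Qed.

Theorem lemma4p2 (R : realType) (k : nat) (hk : (2 <= k)%N)
  (p : nat -> R) (c C0 : R) (hc : 0 < c) (hC0 : 0 < C0)
  (hp : exists N0 : nat, forall n : nat, (N0 <= n)%N ->
     ln (n%:R : R) / powR (n%:R : R) ((k%:R - 1) / k%:R) <= p n /\
     p n <= 1 - c * (ln (n%:R : R) ^+ 4 / n%:R))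
  (eps : nat -> R) (heps : eps n @[n --> \oo] --> 0) :
  exists C : R, 0 < C /\ exists N : nat, forall n : nat, (N <= n)%N ->
    forall e : rel 'I_n, simple_graph e ->
    in_class e k (p n) C0 eps ->
    forall v w : 'I_n,
      (@hitting_time R n e w v <= (C * (p n * n%:R) ^+ k)%:E)%E.
Proof.
have [N0 hN0] := hp.
exists (k.+1%:R * (1 + C0) ^+ k); split.
  apply: mulr_gt0; first by rewrite ltr0n.
  by apply: exprn_gt0; lra.
exists (maxn N0 2) => n hn e hsimp hcl v w.
have hnN0 : (N0 <= n)%N by move: hn; rewrite geq_max => /andP[].
have hn2 : (2 <= n)%N by move: hn; rewrite geq_max => /andP[].
have [hpl _] := hN0 n hnN0.
rewrite /in_class /= in hcl.
case: hcl => [[_ hdiam] hdegb _ _ _].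
have hdeg := @deg_pos n e k hn2 hdiam.
have hn1 : (1 : R) <= n%:R by rewrite ler1n; apply: leq_trans hn2.
have hL0 : 0 <= ln (n%:R : R) := ln_ge0 hn1.
set P := powR (n%:R : R) ((k%:R - 1) / k%:R).
have hP0 : 0 < P by apply: powR_gt0; exact: (lt_le_trans ltr01 hn1).
have hk0 : (0 : R) < k%:R by rewrite ltr0n; apply: leq_trans hk.
have hPn : P <= n%:R.
  apply: ler1_powR => //.
  rewrite ler_pdivrMr //; lra.
set X := p n * n%:R.
have hLX : ln (n%:R : R) <= X.
  have -> : ln (n%:R : R) = ln (n%:R : R) / P * P by field; rewrite gt_eqF.
  rewrite /X; apply: ler_pM => //.
    by apply: divr_ge0 => //; apply: ltW.
  exact: ltW.
have hX0 : 0 <= X by lra.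
have hdegX : forall x, ((deg e x)%:R : R) <= (1 + C0) * X.
  move=> x; have := hdegb x; rewrite ler_norml => /andP[_ h].
  have hs : Num.sqrt (X * ln (n%:R : R)) <= X.
    apply: le_trans (_ : Num.sqrt (X ^+ 2) <= _).
      by apply: ler_wsqrtr; rewrite expr2; apply: ler_wpM2l.
    by rewrite sqrtr_sqr ger0_norm.
  have := ler_wpM2l (ltW hC0) hs.
  rewrite -/X in h; move=> h2; lra.
set D := (1 + C0) * X.
have h0n : (0 < n)%N by apply: leq_trans hn2.
have hD1 : 1 <= D.
  apply: le_trans (hdegX (Ordinal h0n)).
  by rewrite ler1n.
have hD0 : 0 < D by exact: (lt_le_trans ltr01 hD1).
have htr : forall x y, e x y -> D^-1 <= trans R e x y.
  move=> x y hxy; rewrite /trans hxy.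
  rewrite lef_pV2 ?posrE ?ltr0n //; exact: hdegX.
have hdiam' : forall x, exists s, [/\ path e x s, last x s = v & (size s <= k)%N].
  by move=> x; exact: hdiam x v.
have := @hit_le R n e v w k D hdeg hD1 htr hdiam'.
by rewrite /D exprMn mulrA.
Qed.
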